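(* Consider the permanently Colored Magnetic Tower of Hanoi with $N\ge 1$ disks, posts $S$ (source), $I$ (intermediate), $D$ (destination), where $S$ is colored Red, $D$ is colored Blue, and $I$ is colored either Blue or Red (both versions). Then the minimum number of moves needed to transfer all $N$ disks from $S$ to $D$ is $$S_{100}(N)=\sum_{k=1}^N 3^{k-1}=\frac{3^N-1}{2},$$ and in such a minimal solution disk $k$ (disks numbered $1,\dots,N$ from largest to smallest) is moved exactly $P_{100}(k)=3^{k-1}$ times.
   Context: Magnetic Tower of Hanoi (MToH): there are three posts and $N$ disks of distinct diameters, numbered $1$ (largest) to $N$ (smallest). Each disk has two faces, one Red and one Blue. Initially all $N$ disks are stacked on the source post $S$ in decreasing size from bottom to top, each with its Red face up (Blue face down). A move consists of lifting the top disk of some post, turning it upside down, and placing it on top of another post. Rules: (Size rule) a disk may never be placed on a smaller disk; (Magnet rule) a disk may never be placed so that its downward-facing side has the same color as the upward-facing side of the disk it lands on. The puzzle is solved when all $N$ disks are on the destination post $D$ (one of the two initially empty posts) in decreasing size from bottom to top. In the permanently Colored MToH, each post additionally carries a fixed color, and any disk lying on a post (whether or not the post contains other disks) must have its upward-facing side of that post's color. *)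

(* Defs.v *)
From mathcomp Require Import all_boot.
Set Implicit Arguments. Unset Strict Implicit. Unset Printing Implicit Defensive.

(* Magnetic Tower of Hanoi.  Disks are 'I_N; ordinal i corresponds to the
   paper's disk i+1, so ordinal 0 is the largest disk and ordinal N-1 the
   smallest.  Disk i is larger than disk j iff i < j. *)

Inductive post := PS | PI | PD.
Inductive color := Red | Blue.

Definition flipc (c : color) : color := match c with Red => Blue | Blue => Red end.

(* On each post the disks are stacked in decreasing size from bottom
   to top (this invariant is preserved by the size rule), so the stack on a
   post is determined by the set of disks on it; its top disk is the
   smallest one, i.e. the one with the largest index. *)
Record config (N : nat) := Config { pos : 'I_N -> post; up : 'I_N -> color }.

Definition init_config (N : nat) : config N := Config (fun _ => PS) (fun _ => Red).

Definition final_config N (s : config N) : Prop := forall d, pos s d = PD.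

Definition is_top N (s : config N) (p : post) (d : 'I_N) : Prop :=
  pos s d = p /\ forall e, pos s e = p -> (e <= d)%N.

Definition colored_ok N (pc : post -> color) (s : config N) : Prop :=
  forall d, up s d = pc (pos s d).

Definition cmove N (pc : post -> color) (s t : config N) (d : 'I_N) : Prop :=
  exists p q : post,
    [/\ p <> q, is_top s p d,
        (forall e, pos s e = q -> (e < d)%N)
      & (* magnet rule: the downward face of d after flipping (= its old upward
           face) differs from the upward face of the top disk of q *)
        (forall e, is_top s q e -> up s d <> up s e)] /\
        [/\ pos t d = q, up t d = flipc (up s d),
            (forall e, e <> d -> pos t e = pos s e /\ up t e = up s e)
          & colored_ok pc t].

Fixpoint cpath N (pc : post -> color) (s : config N) (ms : seq ('I_N * config N)) : Prop :=
  match ms with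
  | [::] => True
  | (d, t) :: ms' => cmove pc s t d /\ cpath pc t ms'
  end.

Definition csolution N (pc : post -> color) (ms : seq ('I_N * config N)) : Prop :=
  cpath pc (init_config N) ms /\ final_config (last (init_config N) (map snd ms)).

Definition nmoves N (ms : seq ('I_N * config N)) (k : 'I_N) : nat :=
  count (fun x => x.1 == k) ms.

Definition coloring (cI : color) (p : post) : color :=
  match p with PS => Red | PI => cI | PD => Blue end.

(* Main.v *)
Require Import Defs.
From mathcomp Require Import zify.
From mathcomp Require Import all_boot.
Set Implicit Arguments. Unset Strict Implicit. Unset Printing Implicit Defensive.

Definition adj (c p q : post) : Prop := (p = c /\ q <> c) \/ (p <> c /\ q = c).
Definition upd N (f : 'I_N -> post) (d : 'I_N) (q : post) : 'I_N -> post :=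
  fun e => if e == d then q else f e.
Definition vmove N c (f : 'I_N -> post) (d : 'I_N) q : Prop :=
  adj c (f d) q /\ forall e : 'I_N, (d < e)%N -> f e <> f d /\ f e <> q.
Fixpoint apath N c (f : 'I_N -> post) (ms : seq ('I_N * post)) : Prop :=
  match ms with [::] => True | (d, q) :: ms' => vmove c f d q /\ apath c (upd f d q) ms' end.
Fixpoint fin N (f : 'I_N -> post) (ms : seq ('I_N * post)) : 'I_N -> post :=
  match ms with [::] => f | (d, q) :: ms' => fin (upd f d q) ms' end.
Definition nm N (ms : seq ('I_N * post)) (k : 'I_N) := count (fun x => x.1 == k) ms.

Lemma upd_eq N (f : 'I_N -> post) d q : upd f d q d = q.
Proof. by rewrite /upd eqxx. Qed.
Lemma upd_neq N (f : 'I_N -> post) d q e : e != d -> upd f d q e = f e.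
Proof. by rewrite /upd => /negPf ->. Qed.

Lemma apath_cat N c (f : 'I_N -> post) s1 s2 :
  apath c f (s1 ++ s2) <-> apath c f s1 /\ apath c (fin f s1) s2.
Proof.
elim: s1 f => [|[d q] s1 IH] f /=; first by tauto.
rewrite IH; tauto.
Qed.

Lemma fin_cat N (f : 'I_N -> post) s1 s2 : fin f (s1 ++ s2) = fin (fin f s1) s2.
Proof. by elim: s1 f => [|[d q] s1 IH] f //=. Qed.

Lemma fin_nod N (f : 'I_N -> post) s d : ~~ has (fun x => x.1 == d) s -> fin f s d = f d.
Proof.
elim: s f => [|[d' q] s IH] f //=; rewrite negb_or => /andP[h1 h2].
by rewrite IH // upd_neq // eq_sym.
Qed.

Lemma has_move N (f : 'I_N -> post) s d : fin f s d <> f d -> has (fun x => x.1 == d) s.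
Proof. by case: (boolP (has _ s)) => // /fin_nod ->. Qed.

Lemma split_last N (s : seq ('I_N * post)) d : has (fun x => x.1 == d) s ->
  exists s1 q s2, s = s1 ++ (d, q) :: s2 /\ ~~ has (fun x => x.1 == d) s2.
Proof.
elim: s => [|[d' q] s IH] //=.
case: (boolP (has _ s)) => [hs _|hs].
  have [s1 [q' [s2 [-> h]]]] := IH hs.
  by exists ((d', q) :: s1), q', s2.
rewrite orbF => /= /eqP ->; by exists [::], q, s.
Qed.

Lemma split_first N (s : seq ('I_N * post)) d : has (fun x => x.1 == d) s ->
  exists s1 q s2, s = s1 ++ (d, q) :: s2 /\ ~~ has (fun x => x.1 == d) s1.
Proof.
elim: s => [|[d' q] s IH] //=.
case: (boolP (d' == d)) => [/eqP -> _|hd /= hs]; first by exists [::], q, s.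
have [s1 [q' [s2 [-> h]]]] := IH hs.
by exists ((d', q) :: s1), q', s2; rewrite /= negb_or hd.
Qed.

Lemma third (c X Y p : post) : X <> c -> Y <> c -> X <> Y -> p = X \/ p = Y \/ p = c.
Proof. by case: c; case: X; case: Y; case: p; auto. Qed.
Lemma adj_end (c X q : post) : X <> c -> adj c X q -> q = c.
Proof. rewrite /adj; tauto. Qed.
Lemma adj_to_end (c p Y : post) : Y <> c -> adj c p Y -> p = c.
Proof. rewrite /adj; tauto. Qed.
Lemma adj_neq (c p q : post) : adj c p q -> p <> q.
Proof. rewrite /adj => [[[-> h]|[h ->]]] e; congruence. Qed.

Lemma nm_cat N (s1 : seq ('I_N * post)) d q s2 k :
  nm (s1 ++ (d, q) :: s2) k = nm s1 k + (d == k) + nm s2 k.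
Proof. by rewrite /nm count_cat /= addnA. Qed.

Lemma gt_neq N (e d : 'I_N) : (d < e)%N -> e != d.
Proof. by move=> h; apply/negP => /eqP E; rewrite E ltnn in h. Qed.


Lemma lbE N c n : forall m, m + n = N -> forall (X Y : post) (f : 'I_N -> post) ms,
  X <> c -> Y <> c -> X <> Y -> apath c f ms ->
  (forall e : 'I_N, m <= e -> f e = X) -> (forall e : 'I_N, m <= e -> fin f ms e = Y) ->
  forall k : 'I_N, m <= k -> 2 * 3 ^ (k - m) <= nm ms k.
Proof.
elim: n => [|n IH] m Hmn X Y f ms hX hY hXY hp hf hfin k hk.
  by have := ltn_ord k; lia.
have hm : m < N by lia.
pose d := Ordinal hm.
have hd : fin f ms d <> f d by rewrite hfin ?hf //= => e; apply: hXY.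
have [s1 [q [s2 [Ems hn1]]]] := split_first (has_move hd).
subst ms; move: hp; rewrite apath_cat /= => [[hp1 [[hadj hv] hp2]]].
have hf1d : fin f s1 d = X by rewrite fin_nod // hf.
rewrite hf1d in hadj hv; have hq := adj_end hX hadj; subst q.
have hf1 : forall e : 'I_N, m.+1 <= e -> fin f s1 e = Y.
  move=> e he; have [h1 h2] := hv e he.
  by have := third (fin f s1 e) hX hY hXY; tauto.
have B1 := IH m.+1 ltac:(lia) X Y f s1 hX hY hXY hp1 (fun e he => hf e (ltnW he)) hf1.
pose g := upd (fin f s1) d c.
have hfin2 : forall e : 'I_N, m <= e -> fin g s2 e = Y.
  by move=> e he; rewrite -[RHS](hfin e he) fin_cat.
have hd2 : fin g s2 d <> g d by rewrite hfin2 // /g upd_eq.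
have [s3 [q [s4 [Es2 hn4]]]] := split_last (has_move hd2).
subst s2; move: hp2; rewrite apath_cat /= => [[hp3 [[hadj2 hv2] hp4]]].
set h := fin g s3 in hadj2 hv2 hp4.
have hq : q = Y.
  by rewrite -(hfin2 d (leqnn _)) fin_cat /= fin_nod // upd_eq.
subst q; have hhd := adj_to_end hY hadj2; rewrite hhd in hv2.
have hh : forall e : 'I_N, m.+1 <= e -> h e = X.
  move=> e he; have [h1 h2] := hv2 e he.
  by have := third (h e) hX hY hXY; tauto.
have hg : forall e : 'I_N, m.+1 <= e -> g e = Y.
  move=> e he; by rewrite /g upd_neq ?hf1 // gt_neq.
have B2 := IH m.+1 ltac:(lia) Y X g s3 hY hX (nesym hXY) hp3 hg hh.
have hh4 : forall e : 'I_N, m.+1 <= e -> upd h d Y e = X.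
  move=> e he; by rewrite upd_neq ?hh // gt_neq.
have hfin4 : forall e : 'I_N, m.+1 <= e -> fin (upd h d Y) s4 e = Y.
  by move=> e he; rewrite -[RHS](hfin2 e (ltnW he)) fin_cat.
have B3 := IH m.+1 ltac:(lia) X Y _ s4 hX hY hXY hp4 hh4 hfin4.
rewrite !nm_cat.
case: (boolP (d == k)) => [/eqP <-|hdk] /=.
  by rewrite subnn expn0; lia.
have hk' : m.+1 <= k.
  rewrite ltn_neqAle hk andbT; apply: contra hdk => /eqP E.
  by apply/eqP; apply: val_inj.
have := B1 k hk'; have := B2 k hk'; have := B3 k hk'.
have -> : k - m = (k - m.+1).+1 by lia.
rewrite expnS; set t := 3 ^ _; lia.
Qed.

Lemma lbB N c n : forall m, m + n = N -> forall (X Y : post) (f : 'I_N -> post) ms,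
  X <> c -> Y <> c -> X <> Y -> apath c f ms ->
  (forall e : 'I_N, m <= e -> f e = c) -> (forall e : 'I_N, m <= e -> fin f ms e = Y) ->
  forall k : 'I_N, m <= k -> 3 ^ (k - m) <= nm ms k.
Proof.
elim: n => [|n IH] m Hmn X Y f ms hX hY hXY hp hf hfin k hk.
  by have := ltn_ord k; lia.
have hm : m < N by lia.
pose d := Ordinal hm.
have hd : fin f ms d <> f d by rewrite hfin ?hf //= => e; apply: hY.
have [s1 [q [s2 [Ems hn2]]]] := split_last (has_move hd).
subst ms; move: hp; rewrite apath_cat /= => [[hp1 [[hadj hv] hp2]]].
set h := fin f s1 in hadj hv hp2.
have hq : q = Y.
  by rewrite -(hfin d (leqnn _)) fin_cat /= fin_nod // upd_eq.
subst q; have hhd := adj_to_end hY hadj; rewrite hhd in hv.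
have hh : forall e : 'I_N, m.+1 <= e -> h e = X.
  move=> e he; have [h1 h2] := hv e he.
  by have := third (h e) hX hY hXY; tauto.
have B1 := IH m.+1 ltac:(lia) Y X f s1 hY hX (nesym hXY) hp1 (fun e he => hf e (ltnW he)) hh.
have hh4 : forall e : 'I_N, m.+1 <= e -> upd h d Y e = X.
  move=> e he; by rewrite upd_neq ?hh // gt_neq.
have hfin4 : forall e : 'I_N, m.+1 <= e -> fin (upd h d Y) s2 e = Y.
  by move=> e he; rewrite -[RHS](hfin e (ltnW he)) fin_cat.
have Hm1 : m.+1 + n = N by lia.
have B3 := lbE Hm1 hX hY hXY hp2 hh4 hfin4.
rewrite !nm_cat.
case: (boolP (d == k)) => [/eqP <-|hdk] /=.
  by rewrite subnn expn0; lia.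
have hk' : m.+1 <= k.
  rewrite ltn_neqAle hk andbT; apply: contra hdk => /eqP E.
  by apply/eqP; apply: val_inj.
have := B1 k hk'; have := B3 k hk'.
have -> : k - m = (k - m.+1).+1 by lia.
rewrite expnS; set t := 3 ^ _; lia.
Qed.

Lemma lbC N c n : forall m, m + n = N -> forall (X Y : post) (f : 'I_N -> post) ms,
  X <> c -> Y <> c -> X <> Y -> apath c f ms ->
  (forall e : 'I_N, m <= e -> f e = X) -> (forall e : 'I_N, m <= e -> fin f ms e = c) ->
  forall k : 'I_N, m <= k -> 3 ^ (k - m) <= nm ms k.
Proof.
elim: n => [|n IH] m Hmn X Y f ms hX hY hXY hp hf hfin k hk.
  by have := ltn_ord k; lia.
have hm : m < N by lia.
pose d := Ordinal hm.
have hd : fin f ms d <> f d by rewrite hfin ?hf //= => e; apply: hX; rewrite e.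
have [s1 [q [s2 [Ems hn1]]]] := split_first (has_move hd).
subst ms; move: hp; rewrite apath_cat /= => [[hp1 [[hadj hv] hp2]]].
have hf1d : fin f s1 d = X by rewrite fin_nod // hf.
rewrite hf1d in hadj hv; have hq := adj_end hX hadj; subst q.
have hf1 : forall e : 'I_N, m.+1 <= e -> fin f s1 e = Y.
  move=> e he; have [h1 h2] := hv e he.
  by have := third (fin f s1 e) hX hY hXY; tauto.
have Hm1 : m.+1 + n = N by lia.
have B1 := lbE Hm1 hX hY hXY hp1 (fun e he => hf e (ltnW he)) hf1.
pose g := upd (fin f s1) d c.
have hg : forall e : 'I_N, m.+1 <= e -> g e = Y.
  move=> e he; by rewrite /g upd_neq ?hf1 // gt_neq.
have hfin2 : forall e : 'I_N, m.+1 <= e -> fin g s2 e = c.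
  by move=> e he; rewrite -[RHS](hfin e (ltnW he)) fin_cat.
have B2 := IH m.+1 ltac:(lia) Y X g s2 hY hX (nesym hXY) hp2 hg hfin2.
rewrite !nm_cat.
case: (boolP (d == k)) => [/eqP <-|hdk] /=.
  by rewrite subnn expn0; lia.
have hk' : m.+1 <= k.
  rewrite ltn_neqAle hk andbT; apply: contra hdk => /eqP E.
  by apply/eqP; apply: val_inj.
have := B1 k hk'; have := B2 k hk'.
have -> : k - m = (k - m.+1).+1 by lia.
rewrite expnS; set t := 3 ^ _; lia.
Qed.


Definition bb n := \sum_(k < n) 3 ^ k.
Lemma bbS n : bb n.+1 = bb n + 3 ^ n.
Proof. by rewrite /bb big_ord_recr. Qed.
Lemma bb3 n : (2 * bb n).+1 = 3 ^ n.
Proof. elim: n => [|n IH]; first by rewrite /bb big_ord0. rewrite bbS expnS; lia. Qed.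

Fixpoint genE N (c : post) (m n : nat) (X Y : post) : seq ('I_N * post) :=
  match n with 0 => [::] | n'.+1 =>
   match (insub m : option 'I_N) with
   | Some d => genE N c m.+1 n' X Y ++ (d, c) :: genE N c m.+1 n' Y X ++ (d, Y) :: genE N c m.+1 n' X Y
   | None => [::] end end.

Fixpoint genB N (c : post) (m n : nat) (X Y : post) : seq ('I_N * post) :=
  match n with 0 => [::] | n'.+1 =>
   match (insub m : option 'I_N) with
   | Some d => genB N c m.+1 n' Y X ++ (d, Y) :: genE N c m.+1 n' X Y
   | None => [::] end end.

Fixpoint genC N (c : post) (m n : nat) (X Y : post) : seq ('I_N * post) :=
  match n with 0 => [::] | n'.+1 =>
   match (insub m : option 'I_N) with
   | Some d => genE N c m.+1 n' X Y ++ (d, c) :: genC N c m.+1 n' Y X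
   | None => [::] end end.

Lemma eq_ord_m N (d e : 'I_N) m : nat_of_ord d = m -> (e == d) = (nat_of_ord e == m).
Proof. by move=> <-; rewrite val_eqE. Qed.

Lemma genE_ok N c n : forall m, m + n = N -> forall (X Y : post) (f : 'I_N -> post),
  X <> c -> Y <> c -> X <> Y -> (forall e : 'I_N, m <= e -> f e = X) ->
  [/\ apath c f (genE N c m n X Y),
      (forall e, fin f (genE N c m n X Y) e = if m <= e then Y else f e)
    & size (genE N c m n X Y) = 2 * bb n].
Proof.
elim: n => [|n IH] m Hmn X Y f hX hY hXY hf /=.
  split => [//| e |]; last by rewrite /bb big_ord0.
  case: ifP => // he; by have := ltn_ord e; lia.
have hm : m < N by lia.
rewrite insubT /=; set d := Sub m hm; have dv : nat_of_ord d = m by [].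
have Hm1 : m.+1 + n = N by lia.
have [p1 e1 z1] := IH _ Hm1 X Y f hX hY hXY (fun e he => hf e (ltnW he)).
set f1 := fin f _ in e1.
have hf1d : f1 d = X by rewrite e1 dv ltnn hf // dv.
pose f2 := upd f1 d c.
have hf2 : forall e : 'I_N, m.+1 <= e -> f2 e = Y.
  by move=> e he; rewrite /f2 upd_neq ?e1 ?he // gt_neq // dv.
have [p2 e2 z2] := IH _ Hm1 Y X f2 hY hX (nesym hXY) hf2.
set f3 := fin f2 _ in e2.
have hf3d : f3 d = c by rewrite e2 dv ltnn /f2 upd_eq.
pose f4 := upd f3 d Y.
have hf4 : forall e : 'I_N, m.+1 <= e -> f4 e = X.
  by move=> e he; rewrite /f4 upd_neq ?e2 ?he // gt_neq // dv.
have [p3 e3 z3] := IH _ Hm1 X Y f4 hX hY hXY hf4.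
split.
- rewrite apath_cat; split => //=; split.
    rewrite /vmove -/f1 hf1d; split; first by rewrite /adj; tauto.
    move=> e he; rewrite e1 -dv he; split; congruence.
  rewrite apath_cat; split => //; rewrite -/f3 /=; split => //.
  rewrite /vmove hf3d; split; first by rewrite /adj; left; split; congruence.
  move=> e he; rewrite e2 -dv he; split; congruence.
- move=> e; rewrite fin_cat /= -/f2 fin_cat /= -/f3 -/f4 e3.
  case: (ltngtP m e) => he //=.
  + have ned : e != d by apply/negP => /eqP E; move: he; rewrite E dv ltnn.
    rewrite /f4 upd_neq // e2 ltnNge (ltnW he) /= /f2 upd_neq // e1.
    by rewrite ltnNge (ltnW he).
  + have ed : e = d by apply: ord_inj; rewrite dv.
    by rewrite /f4 ed upd_eq.
- by rewrite size_cat /= size_cat /= z1 z2 bbS -(bb3 n); lia.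
Qed.

Lemma genB_ok N c n : forall m, m + n = N -> forall (X Y : post) (f : 'I_N -> post),
  X <> c -> Y <> c -> X <> Y -> (forall e : 'I_N, m <= e -> f e = c) ->
  [/\ apath c f (genB N c m n X Y),
      (forall e, fin f (genB N c m n X Y) e = if m <= e then Y else f e)
    & size (genB N c m n X Y) = bb n].
Proof.
elim: n => [|n IH] m Hmn X Y f hX hY hXY hf /=.
  split => [//| e |]; last by rewrite /bb big_ord0.
  case: ifP => // he; by have := ltn_ord e; lia.
have hm : m < N by lia.
rewrite insubT /=; set d := Sub m hm; have dv : nat_of_ord d = m by [].
have Hm1 : m.+1 + n = N by lia.
have [p1 e1 z1] := IH _ Hm1 Y X f hY hX (nesym hXY) (fun e he => hf e (ltnW he)).
set f1 := fin f _ in e1.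
have hf1d : f1 d = c by rewrite e1 dv ltnn hf // dv.
pose f2 := upd f1 d Y.
have hf2 : forall e : 'I_N, m.+1 <= e -> f2 e = X.
  by move=> e he; rewrite /f2 upd_neq ?e1 ?he // gt_neq // dv.
have [p2 e2 z2] := genE_ok Hm1 hX hY hXY hf2.
split.
- rewrite apath_cat; split => //=; split.
    rewrite /vmove -/f1 hf1d; split; first by rewrite /adj; left; split; congruence.
    move=> e he; rewrite e1 -dv he; split; congruence.
  exact: p2.
- move=> e; rewrite fin_cat /= -/f2 e2.
  case: (ltngtP m e) => he //=.
  + have ned : e != d by apply/negP => /eqP E; move: he; rewrite E dv ltnn.
    rewrite /f2 upd_neq // e1.
    by rewrite ltnNge (ltnW he).
  + have ed : e = d by apply: ord_inj; rewrite dv.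
    by rewrite /f2 ed upd_eq.
- by rewrite size_cat /= z1 z2 bbS -(bb3 n); lia.
Qed.

Lemma genC_ok N c n : forall m, m + n = N -> forall (X Y : post) (f : 'I_N -> post),
  X <> c -> Y <> c -> X <> Y -> (forall e : 'I_N, m <= e -> f e = X) ->
  [/\ apath c f (genC N c m n X Y),
      (forall e, fin f (genC N c m n X Y) e = if m <= e then c else f e)
    & size (genC N c m n X Y) = bb n].
Proof.
elim: n => [|n IH] m Hmn X Y f hX hY hXY hf /=.
  split => [//| e |]; last by rewrite /bb big_ord0.
  case: ifP => // he; by have := ltn_ord e; lia.
have hm : m < N by lia.
rewrite insubT /=; set d := Sub m hm; have dv : nat_of_ord d = m by [].
have Hm1 : m.+1 + n = N by lia.
have [p1 e1 z1] := genE_ok Hm1 hX hY hXY (fun e he => hf e (ltnW he)).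
set f1 := fin f _ in e1.
have hf1d : f1 d = X by rewrite e1 dv ltnn hf // dv.
pose f2 := upd f1 d c.
have hf2 : forall e : 'I_N, m.+1 <= e -> f2 e = Y.
  by move=> e he; rewrite /f2 upd_neq ?e1 ?he // gt_neq // dv.
have [p2 e2 z2] := IH _ Hm1 Y X f2 hY hX (nesym hXY) hf2.
split.
- rewrite apath_cat; split => //=; split.
    rewrite /vmove -/f1 hf1d; split; first by rewrite /adj; right; split; congruence.
    move=> e he; rewrite e1 -dv he; split; congruence.
  exact: p2.
- move=> e; rewrite fin_cat /= -/f2 e2.
  case: (ltngtP m e) => he //=.
  + have ned : e != d by apply/negP => /eqP E; move: he; rewrite E dv ltnn.
    rewrite /f2 upd_neq // e1.
    by rewrite ltnNge (ltnW he).
  + have ed : e = d by apply: ord_inj; rewrite dv.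
    by rewrite /f2 ed upd_eq.
- by rewrite size_cat /= z1 z2 bbS -(bb3 n); lia.
Qed.


Definition cen (cI : color) : post := match cI with Blue => PS | Red => PD end.

Lemma col_adj cI p q : coloring cI q = flipc (coloring cI p) -> adj (cen cI) p q.
Proof. case: cI; case: p; case: q => //= _; rewrite /adj; intuition discriminate. Qed.
Lemma adj_col cI p q : adj (cen cI) p q -> coloring cI q = flipc (coloring cI p).
Proof. case: cI; case: p; case: q => //=; rewrite /adj; intuition congruence. Qed.
Lemma flip_neq x : flipc x <> x.
Proof. by case: x. Qed.

Lemma apath_ext N c (f g : 'I_N -> post) ms : (forall e, f e = g e) ->
  apath c f ms -> apath c g ms /\ forall e, fin f ms e = fin g ms e.
Proof.
elim: ms f g => [|[d q] ms IH] f g hfg //= [[ha hv] hp].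
have hu : forall e, upd f d q e = upd g d q e by move=> e; rewrite /upd hfg.
have [h1 h2] := IH _ _ hu hp.
split; [split; [|exact h1] | exact h2].
rewrite /vmove -!hfg; split => // e he; rewrite -!hfg; exact: hv.
Qed.

Definition abs N (ms : seq ('I_N * config N)) : seq ('I_N * post) :=
  map (fun x => (x.1, pos x.2 x.1)) ms.

Lemma c2a N cI : forall (ms : seq ('I_N * config N)) (s : config N),
  colored_ok (coloring cI) s -> cpath (coloring cI) s ms ->
  apath (cen cI) (pos s) (abs ms) /\
  forall e, fin (pos s) (abs ms) e = pos (last s (map snd ms)) e.
Proof.
elim => [|[d t] ms IH] s hs //=.
move=> [[p [q [[hpq [hpd htop] hsize hmag] [htd hup hoth hok]]]] hrest].
have [h1 h2] := IH t hok hrest.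
have hu : forall e, pos t e = upd (pos s) d (pos t d) e.
  move=> e; rewrite /upd; case: eqP => [->//|/hoth []] //.
have [h3 h4] := apath_ext hu h1.
split; last by move=> e; rewrite -h4 h2.
split=> //; split.
  by apply: col_adj; rewrite -hok hup hs.
move=> e he; rewrite htd hpd; split => E.
  by have := htop e E; rewrite leqNgt he.
by have := hsize e E; rewrite ltnNge (ltnW he).
Qed.

Definition mkc N cI (f : 'I_N -> post) : config N := Config f (fun e => coloring cI (f e)).
Fixpoint mk N cI (f : 'I_N -> post) (ms : seq ('I_N * post)) : seq ('I_N * config N) :=
  match ms with [::] => [::]
  | (d, q) :: ms' => (d, mkc cI (upd f d q)) :: mk cI (upd f d q) ms' end.

Lemma a2c N cI : forall (ms : seq ('I_N * post)) (f : 'I_N -> post) (s : config N),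
  (forall e, pos s e = f e) -> colored_ok (coloring cI) s -> apath (cen cI) f ms ->
  [/\ cpath (coloring cI) s (mk cI f ms),
      (forall e, pos (last s (map snd (mk cI f ms))) e = fin f ms e)
    & size (mk cI f ms) = size ms].
Proof.
elim => [|[d q] ms IH] f s hsf hs //= [[hadj hv] hp].
have [h1 h2 h3] := IH (upd f d q) (mkc cI (upd f d q)) (fun e => erefl) (fun e => erefl) hp.
split => //; last by rewrite h3.
split => //.
have hcol := adj_col hadj.
exists (f d), q; split; split.
- exact: adj_neq hadj.
- split; first exact: hsf.
  move=> e; rewrite hsf => E; rewrite leqNgt; apply/negP => he.
  by have [] := hv e he.
- move=> e; rewrite hsf => E.
  case: (ltngtP e d) => // he.
    by have [] := hv e he.
  have ed : e = d by apply: ord_inj.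
  by move: E; rewrite ed => E; have := adj_neq hadj.
- move=> e [he _]; rewrite hs (hs e) he hsf hcol => E.
  exact: (flip_neq (esym E)).
- by rewrite /= upd_eq.
- by rewrite /= upd_eq hs hsf.
- by move=> e /eqP ne; rewrite /= upd_neq // hs hsf.
- by [].
Qed.


Lemma size_sum N (s : seq ('I_N * post)) : size s = \sum_(k < N) nm s k.
Proof.
elim: s => [|x s IH] /=; first by rewrite big1.
rewrite /nm /= big_split /= -/(nm s) -IH (bigD1 x.1) //= eqxx big1 // => k.
by rewrite eq_sym => /negPf ->.
Qed.

Lemma sum_eq_pw N (F G : 'I_N -> nat) : (forall k, G k <= F k) ->
  \sum_(k < N) F k = \sum_(k < N) G k -> forall k, F k = G k.
Proof.
move=> hle hs k; move: hs; rewrite (bigD1 k) //= [X in _ = X](bigD1 k) //=.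
have : \sum_(i < N | i != k) G i <= \sum_(i < N | i != k) F i by apply: leq_sum.
have := hle k; set a := \sum_(i < N | _) G i; set b := \sum_(i < N | _) F i; lia.
Qed.

Lemma nm_abs N (ms : seq ('I_N * config N)) k : nmoves ms k = nm (abs ms) k.
Proof. by rewrite /nm /abs count_map. Qed.

Lemma lb_disk N cI (ms : seq ('I_N * config N)) : csolution (coloring cI) ms ->
  forall k : 'I_N, 3 ^ k <= nm (abs ms) k.
Proof.
move=> [hp hf] k.
have hs : colored_ok (coloring cI) (init_config N) by [].
have [h1 h2] := c2a hs hp.
have hfin : forall e, fin (pos (init_config N)) (abs ms) e = PD by move=> e; rewrite h2 hf.
have H0 : 0 + N = N by [].
case: cI hs hp hf h1 h2 hfin => /= hs hp hf h1 h2 hfin.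
- have hX : PS <> PD by []. have hY : PI <> PD by []. have hXY : PS <> PI by [].
  have := lbC H0 hX hY hXY h1 (fun e _ => erefl) (fun e _ => hfin e) (leq0n k).
  by rewrite subn0.
- have hX : PI <> PS by []. have hY : PD <> PS by []. have hXY : PI <> PD by [].
  have := lbB H0 hX hY hXY h1 (fun e _ => erefl) (fun e _ => hfin e) (leq0n k).
  by rewrite subn0.
Qed.

Lemma exists_sol N cI : exists ms : seq ('I_N * config N),
  csolution (coloring cI) ms /\ size ms = bb N.
Proof.
have H0 : 0 + N = N by [].
have [ams [ha hf hz]] : exists ams : seq ('I_N * post),
  [/\ apath (cen cI) (fun _ => PS) ams, forall e, fin (fun _ => PS) ams e = PD
    & size ams = bb N].
  case: cI => /=.
  - have hX : PS <> PD by []. have hY : PI <> PD by []. have hXY : PS <> PI by [].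
    have [p1 e1 z1] := genC_ok H0 hX hY hXY (f := fun _ => PS) (fun e _ => erefl).
    by exists (genC N PD 0 N PS PI); split.
  - have hX : PI <> PS by []. have hY : PD <> PS by []. have hXY : PI <> PD by [].
    have [p1 e1 z1] := genB_ok H0 hX hY hXY (f := fun _ => PS) (fun e _ => erefl).
    by exists (genB N PS 0 N PI PD); split.
have hs : colored_ok (coloring cI) (init_config N) by [].
have [h1 h2 h3] := a2c (s := init_config N) (fun e => erefl) hs ha.
exists (mk cI (fun _ => PS) ams); split; last by rewrite h3.
by split => // e; rewrite h2 hf.
Qed.

Theorem mainTheorem1 (N : nat) (cI : color) : (1 <= N)%N ->
  let S100 := (\sum_(k < N) 3 ^ k)%N in
  [/\ S100 = (3 ^ N - 1) %/ 2,
      (exists ms, @csolution N (coloring cI) ms /\ size ms = S100),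
      (forall ms, @csolution N (coloring cI) ms -> (S100 <= size ms)%N)
    & (forall ms, @csolution N (coloring cI) ms -> size ms = S100 ->
         forall k : 'I_N, nmoves ms k = 3 ^ k)].
Proof.
move=> hN S100; have ES : S100 = bb N by [].
split.
- by rewrite ES -(bb3 N) subn1 /= mulKn.
- exact: exists_sol.
- move=> ms hms; rewrite -(size_map (fun x => (x.1, pos x.2 x.1))) -/(abs ms) size_sum.
  by apply: leq_sum => k _; apply: lb_disk hms k.
- move=> ms hms hsz k; rewrite nm_abs.
  apply: (sum_eq_pw (F := nm (abs ms)) (G := fun k : 'I_N => 3 ^ k)) => //.
    by move=> j; apply: lb_disk hms j.
  by rewrite -size_sum /abs size_map hsz.
Qed.
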